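(* Let $(M,\le)$ be a finite ordered monoid. If $M$ is a $T_q$ monoid for some $q>1$, or if $M$ is divided (as an ordered monoid) by one of $BA_2^+$, $U^+$, or a non-commutative group (with any stable order), then $N^1(M)=\Omega(n)$.
   Context: $M$ is a $T_q$ monoid if there exist idempotents $e,f\in M$ with $(ef)^qe=e$ and $(ef)^re\ne e$ for every positive integer $r$ not divisible by $q$. Syntactic ordered monoid of $L\subseteq\Sigma^*$: write $x\preceq_L y$ if for all $u,v$, $uyv\in L\Rightarrow uxv\in L$; $\Sigma^*/\equiv_L$ (with $x\equiv_L y$ iff $x\preceq_L y$ and $y\preceq_L x$) ordered by $[x]\le[y]$ iff $x\preceq_L y$. $BA_2^+$ is the syntactic ordered monoid of $(ab)^*\subseteq\{a,b\}^*$; $U^+$ is the syntactic ordered monoid of the complement in $\{a,b\}^*$ of $(a\cup b)^*aa(a\cup b)^*$. An ordered monoid $N$ divides $M$ if there is a surjective order-preserving monoid morphism from a submonoid of $M$ (restricted order) onto $N$. A finite ordered monoid has a partial order with $x\le y\Rightarrow zx\le zy,\ xz\le yz$. $N^1(f)$ is the non-deterministic communication complexity of $f:X\times Y\to\{0,1\}$; equivalently, up to an additive constant 2, $\log_2$ of the minimum number of rectangles $S\times T$ on which $f\equiv1$ covering $f^{-1}(1)$. For an order ideal $I$ ($y\in I, x\le y\Rightarrow x\in I$), $N^1(M,I)(n)$ is $N^1$ of the function where Alice receives $m_1,m_3,\dots,m_{2n-1}$, Bob receives $m_2,\dots,m_{2n}$, value $1$ iff $m_1\cdots m_{2n}\in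 I$; $N^1(M)=\max_I N^1(M,I)$. *)

(* Defs.v *)
From HB Require Import structures.
From mathcomp Require Import all_boot.
Set Implicit Arguments. Unset Strict Implicit. Unset Printing Implicit Defensive.

Record ordMonoid := OrdMonoid {
  om_car :> finType;
  om_mul : om_car -> om_car -> om_car;
  om_one : om_car;
  om_le : rel om_car;
  om_mulA : associative om_mul;
  om_mul1 : left_id om_one om_mul;
  om_mulr1 : right_id om_one om_mul;
  om_le_refl : reflexive om_le;
  om_le_anti : antisymmetric om_le;
  om_le_trans : transitive om_le;
  om_le_mull : forall z x y, om_le x y -> om_le (om_mul z x) (om_mul z y);
  om_le_mulr : forall z x y, om_le x y -> om_le (om_mul x z) (om_mul y z)
}.

Arguments om_mul {_}. Arguments om_one {_}. Arguments om_le {_}.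

Definition mpow (M : ordMonoid) (x : M) (n : nat) : M := iter n (om_mul x) om_one.

Definition idem (M : ordMonoid) (x : M) := om_mul x x = x.

Definition Tq (M : ordMonoid) (q : nat) : Prop :=
  exists e f : M, idem e /\ idem f /\
    om_mul (mpow (om_mul e f) q) e = e /\
    forall r, 0 < r -> ~~ (q %| r) -> om_mul (mpow (om_mul e f) r) e <> e.

Definition divides (N M : ordMonoid) : Prop :=
  exists (S : {set M}) (phi : M -> N),
    [/\ om_one \in S /\
        (forall x y, x \in S -> y \in S -> om_mul x y \in S),
        phi om_one = om_one,
        (forall x y, x \in S -> y \in S -> phi (om_mul x y) = om_mul (phi x) (phi y)),
        (forall x y, x \in S -> y \in S -> om_le x y -> om_le (phi x) (phi y))
      & (forall z : N, exists2 x, x \in S & phi x = z)].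

Definition is_group (N : ordMonoid) : Prop :=
  forall x : N, exists y : N, om_mul x y = om_one /\ om_mul y x = om_one.

Definition noncomm (N : ordMonoid) : Prop :=
  exists x y : N, om_mul x y <> om_mul y x.

(* Words over {a,b} are seq bool, with a = true, b = false. *)
Definition synle (L : seq bool -> bool) (x y : seq bool) : Prop :=
  forall u v, L (u ++ y ++ v) -> L (u ++ x ++ v).
Definition syneq (L : seq bool -> bool) (x y : seq bool) : Prop :=
  synle L x y /\ synle L y x.

(* The syntactic ordered monoid Σ*/≡_L divides M.  A map S -> Σ*/≡_L is
   represented by a choice of representatives rep : M -> seq bool. *)
Definition syn_divides (L : seq bool -> bool) (M : ordMonoid) : Prop :=
  exists (S : {set M}) (rep : M -> seq bool),
    [/\ om_one \in S /\
        (forall x y, x \in S -> y \in S -> om_mul x y \in S),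
        syneq L (rep om_one) [::],
        (forall x y, x \in S -> y \in S -> syneq L (rep (om_mul x y)) (rep x ++ rep y)),
        (forall x y, x \in S -> y \in S -> om_le x y -> synle L (rep x) (rep y))
      & (forall w, exists2 x, x \in S & syneq L (rep x) w)].

Fixpoint abstar (w : seq bool) : bool :=
  match w with
  | [::] => true
  | true :: false :: w' => abstar w'
  | _ => false
  end.

Definition noaa (w : seq bool) : bool := ~~ infix [:: true; true] w.

Definition BA2p_divides (M : ordMonoid) := syn_divides abstar M.
Definition Up_divides (M : ordMonoid) := syn_divides noaa M.

Definition is_one_rect (X Y : finType) (f : X -> Y -> bool) (R : {set X} * {set Y}) :=
  [forall x in R.1, forall y in R.2, f x y].

Definition is_cover (X Y : finType) (f : X -> Y -> bool) (C : {set {set X} * {set Y}}) :=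
  [forall R in C, is_one_rect f R] &&
  [forall x, forall y, f x y ==> [exists R in C, (x \in R.1) && (y \in R.2)]].

(* minimum number of 1-rectangles covering f^{-1}(1); #|X|*#|Y| is an upper
   bound (singleton rectangles), so it is a harmless default for the min *)
Definition cover_number (X Y : finType) (f : X -> Y -> bool) : nat :=
  \big[minn/(#|X| * #|Y|)]_(C | is_cover f C) #|C|.

(* N^1(f) := ceil(log2 (cover number)), (additive constants irrelevant) *)
Definition N1 (X Y : finType) (f : X -> Y -> bool) : nat := up_log 2 (cover_number f).

Definition order_ideal (M : ordMonoid) (I : {set M}) : bool :=
  [forall x, forall y, (y \in I) && om_le x y ==> (x \in I)].

(* Alice holds m1,m3,...,m_{2n-1} (= x), Bob holds m2,...,m_{2n} (= y). *)
Definition word_fun (M : ordMonoid) (I : {set M}) (n : nat)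
    (x : n.-tuple M) (y : n.-tuple M) : bool :=
  \big[om_mul/om_one]_(i < n) om_mul (tnth x i) (tnth y i) \in I.

Definition N1M (M : ordMonoid) (n : nat) : nat :=
  \max_(I : {set M} | order_ideal I) N1 (word_fun I (n:=n)).

Definition OmegaN (g : nat -> nat) : Prop :=
  exists k, 0 < k /\ exists n0, forall n, n0 <= n -> n <= k * g n.

(* Main.v *)
Require Import Defs.
From HB Require Import structures.
From mathcomp Require Import all_boot all_algebra.
From Stdlib Require Import ClassicalEpsilon Lia.
Set Implicit Arguments. Unset Strict Implicit. Unset Printing Implicit Defensive.


Lemma sum_bool_card (T : finType) (P : {set T}) (b : pred T) :
  \sum_(x in P) (b x : nat) = #|[set x in P | b x]|.
Proof.
rewrite -sum1_card big_mkcond [RHS]big_mkcond /=; apply: eq_bigr => x _.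
by rewrite inE; case: (x \in P); case: (b x).
Qed.

Lemma cover_lb_gen (X Y D E : finType) (f : X -> Y -> bool) (al : D -> X) (be : E -> Y)
  (P : {set D * E}) (K : nat) :
  (forall de, de \in P -> f (al de.1) (be de.2)) ->
  (forall R : {set X} * {set Y}, is_one_rect f R ->
     #|[set de in P | (al de.1 \in R.1) && (be de.2 \in R.2)]| <= K) ->
  forall C, is_cover f C -> #|P| <= K * #|C|.
Proof.
move=> HP HR C /andP[/forallP HC1 /forallP HC2].
apply: (@leq_trans (\sum_(R in C) #|[set de in P | (al de.1 \in R.1) && (be de.2 \in R.2)]|)).
  rewrite -sum1_card.
  apply: (@leq_trans (\sum_(de in P) \sum_(R in C) (((al de.1 \in R.1) && (be de.2 \in R.2)) : nat))).
    apply: leq_sum => de deP.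
    have := HC2 (al de.1) => /forallP /(_ (be de.2)) /implyP /(_ (HP _ deP)) /existsP [R /andP[RC Rin]].
    by rewrite (bigD1 R) //= Rin; exact: leq_addr.
  rewrite exchange_big /=; apply: leq_sum => R RC.
  by rewrite (sum_bool_card P (fun de => (al de.1 \in R.1) && (be de.2 \in R.2))).
rewrite mulnC -sum_nat_const; apply: leq_sum => R RC.
by apply: HR; have := HC1 R; rewrite RC.
Qed.

Lemma cover_number_lb (X Y D E : finType) (f : X -> Y -> bool) (al : D -> X) (be : E -> Y)
  (P : {set D * E}) (K : nat) :
  (forall de, de \in P -> f (al de.1) (be de.2)) ->
  (forall R : {set X} * {set Y}, is_one_rect f R ->
     #|[set de in P | (al de.1 \in R.1) && (be de.2 \in R.2)]| <= K) ->
  #|P| <= K * cover_number f.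
Proof.
move=> HP HR; rewrite /cover_number.
apply: (big_ind (fun v => #|P| <= K * v)).
- pose C0 : {set {set X} * {set Y}} :=
    (fun xy : X * Y => ([set xy.1], [set xy.2])) @: [set xy | f xy.1 xy.2].
  have C0c : is_cover f C0.
    apply/andP; split.
      apply/forallP => R; apply/implyP; rewrite /C0 => /imsetP [[x y]]; rewrite inE /= => fxy ->.
      by apply/forallP => x'; apply/implyP; rewrite inE => /eqP ->;
         apply/forallP => y'; apply/implyP; rewrite inE => /eqP ->.
    apply/forallP => x; apply/forallP => y; apply/implyP => fxy.
    apply/existsP; exists ([set x], [set y]); apply/andP; split; last by rewrite /= !in_set1 !eqxx.
    by apply/imsetP; exists (x, y); rewrite // inE.
  apply: (leq_trans (cover_lb_gen HP HR C0c)); rewrite leq_mul2l; apply/orP; right.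
  apply: (leq_trans (leq_imset_card _ _)); rewrite -card_prod; exact: max_card.
- move=> a b Ha Hb; rewrite /minn; by case: ifP.
- by move=> C /(cover_lb_gen HP HR).
Qed.

Module LinAlg.
Import GRing.Theory.

Definition vmx (p m : nat) (A : {set {ffun 'I_m -> bool}}) : 'M['F_p]_(#|A|, m) :=
  \matrix_(i, k) ((((enum_val i : {ffun 'I_m -> bool}) k) : nat)%:R)%R.

Lemma bool_natr_inj (p : nat) (b c : bool) : prime p -> ((b : nat)%:R = (c : nat)%:R :> 'F_p)%R -> b = c.
Proof.
move=> pp; case: b; case: c => //= /eqP; rewrite ?oner_eq0 //; rewrite eq_sym oner_eq0 //.
Qed.

Lemma Hex (T : finType) (A : {set T}) a : a \in A -> exists i : 'I_#|A|, enum_val i = a.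
Proof. move=> aA; exists (enum_rank_in aA a). exact: enum_rankK_in. Qed.

Lemma card_le_rank p m (A : {set {ffun 'I_m -> bool}}) : prime p ->
  #|A| <= 2 ^ \rank (vmx p A).
Proof.
move=> pp.
set Mt := trmx (vmx p A).
set f := maxrankfun Mt.
have Hrow k : exists x : 'rV['F_p]_(\rank Mt), row k Mt = (x *m rowsub f Mt)%R.
  have : (row k Mt <= rowsub f Mt)%MS by rewrite (eq_maxrowsub Mt) row_sub.
  by case/submxP => x ->; exists x.
pose psi (a : {ffun 'I_m -> bool}) : {ffun 'I_(\rank Mt) -> bool} := [ffun j => a (f j)].
have injpsi : {in A &, injective psi}.
  move=> a a' aA a'A /ffunP eqa; apply/ffunP => k.
  have [x hx] := Hrow k.
  have e i : Mt k i = (\sum_j x ord0 j * Mt (f j) i)%R.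
    have := congr1 (fun N : 'M_(1, _) => N ord0 i) hx; rewrite mxE => ->.
    by rewrite mxE; apply: eq_bigr => j _; rewrite mxE.
  have [i ei] := Hex aA; have [i' ei'] := Hex a'A.
  have ea := e i; have ea' := e i'.
  rewrite /Mt !mxE ei in ea.
  rewrite /Mt !mxE ei' in ea'.
  apply: (bool_natr_inj pp); rewrite ea ea'; apply: eq_bigr => j _.
  by rewrite !mxE ei ei'; have := eqa j; rewrite !ffunE => ->.
apply: (@leq_trans #|psi @: A|); first by rewrite (card_in_imset injpsi).
apply: (leq_trans (max_card _)).
by rewrite card_ffun card_bool card_ord /Mt mxrank_tr.
Qed.

Lemma ortho_bound p m (A B : {set {ffun 'I_m -> bool}}) : prime p ->
  (forall a b, a \in A -> b \in B -> p %| \sum_(k < m) (a k && b k)) ->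
  #|A| * #|B| <= 2 ^ m.
Proof.
move=> pp H.
have H0 : ((vmx p A) *m trmx (vmx p B) = 0)%R.
  apply/matrixP => i i'; rewrite !mxE.
  have := H _ _ (enum_valP i) (enum_valP i').
  move=> /dvdnP [c Hc].
  transitivity ((\sum_(k < m) (enum_val i k && enum_val i' k) : nat)%:R : 'F_p)%R.
    rewrite natr_sum; apply: eq_bigr => k _; rewrite !mxE.
    by case: (enum_val i k); case: (enum_val i' k); rewrite /= ?mul1r ?mul0r ?mulr0.
  by rewrite Hc natrM (pchar_Fp_0 pp) mulr0.
have := mulmx0_rank_max H0; rewrite mxrank_tr => Hr.
apply: (leq_trans (leq_mul (card_le_rank A pp) (card_le_rank B pp))).
by rewrite -expnD leq_exp2l.
Qed.

End LinAlg.
Import LinAlg.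

Lemma fool_lb (X Y D : finType) (f : X -> Y -> bool) (al : D -> X) (be : D -> Y) :
  (forall d, f (al d) (be d)) ->
  (forall d d', f (al d) (be d') -> f (al d') (be d) -> d = d') ->
  #|D| <= cover_number f.
Proof.
move=> Hd Hf.
pose P : {set D * D} := (fun d => (d, d)) @: setT.
have cP : #|P| = #|D|.
  by rewrite card_imset ?cardsT // => x y [].
rewrite -cP -[cover_number f]mul1n.
apply: (cover_number_lb (al := al) (be := be)).
  by move=> de /imsetP [d _ ->].
move=> R /forallP HR; apply/card_le1_eqP => [[d1 d1'] [d2 d2']].
rewrite !inE => /andP [/imsetP [x1 _ [-> ->]] /andP [h11 h12]]
               /andP [/imsetP [x2 _ [-> ->]] /andP [h21 h22]].
have := HR (al x1); rewrite h11 => /forallP /(_ (be x2)); rewrite h22 /= => f12.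
have := HR (al x2); rewrite h21 => /forallP /(_ (be x1)); rewrite h12 /= => f21.
by rewrite (Hf _ _ f12 f21).
Qed.

Lemma mod_lb (X Y : finType) m (f : X -> Y -> bool)
  (al : {ffun 'I_m -> bool} -> X) (be : {ffun 'I_m -> bool} -> Y) p : prime p ->
  (forall a b : {ffun 'I_m -> bool}, [forall k, ~~ (a k && b k)] -> f (al a) (be b)) ->
  (forall a b : {ffun 'I_m -> bool}, f (al a) (be b) -> p %| \sum_(k < m) (a k && b k)) ->

  3 ^ m <= 2 ^ m * cover_number f.
Proof.
move=> pp Hdis Hmod.
pose g (h : {ffun 'I_m -> 'I_3}) : {ffun 'I_m -> bool} * {ffun 'I_m -> bool} :=
  ([ffun k => h k == 1 :> nat], [ffun k => h k == 2 :> nat]).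
pose P := g @: setT.
have cP : #|P| = 3 ^ m.
  rewrite card_imset ?cardsT ?card_ffun ?card_ord //.
  move=> h h' [] /ffunP e1 /ffunP e2; apply/ffunP => k.
  have := e1 k; have := e2 k; rewrite !ffunE.
  case: (h k) => [[|[|[|?]]] ?] //; case: (h' k) => [[|[|[|?]]] ?] //= _ _; exact: val_inj.
rewrite -cP; apply: (cover_number_lb (al := al) (be := be)).
  move=> de /imsetP [h _ ->]; apply: Hdis; apply/forallP => k; rewrite !ffunE.
  by case: (h k) => [[|[|[|?]]] ?].
move=> R /forallP HR.
pose A := [set a | al a \in R.1]; pose B := [set b | be b \in R.2].
apply: (@leq_trans #|setX A B|).
  apply: subset_leq_card; apply/subsetP => [[a b]]; rewrite !inE /= => /andP [_ ->].
  by [].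
rewrite cardsX; apply: (ortho_bound pp) => a b; rewrite !inE => ha hb.
apply: Hmod; have := HR _; move=> /(_ (al a)); rewrite ha => /forallP /(_ (be b)).
by rewrite hb.
Qed.

Lemma N1M_ge (M : ordMonoid) n (I : {set M}) j : order_ideal I ->
  2 ^ j <= cover_number (@word_fun M I n) -> j <= N1M M n.
Proof.
move=> HI Hc; rewrite /N1M.
apply: leq_trans (leq_bigmax_cond _ HI); rewrite /N1.
have := @up_logP 2 (cover_number (word_fun I (n:=n))) isT => H2.
by rewrite -(leq_exp2l _ _ (isT : 1 < 2)); exact: leq_trans H2.
Qed.

Lemma omega_of (g : nat -> nat) D : 0 < D -> (forall n, n.-1 %/ D <= g n) -> OmegaN g.
Proof.
move=> D0 H; exists (2 * D); split; first by rewrite muln_gt0 D0.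
exists D.+1 => n Hn.
have j1 : 0 < n.-1 %/ D by rewrite divn_gt0 // -ltnS prednK // (leq_trans _ Hn).
have Hc := ltn_ceil (n.-1) D0.
have h1 : n <= (n.-1 %/ D).+1 * D.
  by rewrite -{1}(prednK (leq_trans (ltn0Sn _) Hn)).
have h2 : (n.-1 %/ D).+1 <= 2 * g n.
  apply: (@leq_trans (2 * (n.-1 %/ D))); last by rewrite leq_mul2l H orbT.
  by rewrite mul2n -addnn -addn1 leq_add2l.
apply: (leq_trans h1); rewrite (mulnC 2 D) -mulnA [D * _]mulnC leq_mul2r h2 orbT //.


Qed.


Definition zprod (M : ordMonoid) (sA sB : seq M) : M :=
  foldr (fun pr acc => om_mul (om_mul pr.1 pr.2) acc) om_one (zip sA sB).

Lemma big_zprod (M : ordMonoid) n (sA sB : seq M) : size sA = size sB -> size sA <= n ->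
  \big[om_mul/om_one]_(i < n) om_mul (nth om_one sA i) (nth om_one sB i) = zprod sA sB.
Proof.
elim: n sA sB => [|n IH] sA sB.
  by case: sA; case: sB => // _ _; rewrite big_ord0.
rewrite big_ord_recl.
case: sA => [|x sA]; case: sB => [|y sB] //= .
  move=> _ _; rewrite /= om_mul1 om_mul1.
  rewrite -(IH [::] [::] erefl isT); apply: eq_bigr => i _.
  by rewrite !nth_nil om_mul1.









move=> [e] hs; rewrite (IH sA sB) //.
Qed.

Lemma zprod_cat (M : ordMonoid) (sA1 sB1 sA2 sB2 : seq M) : size sA1 = size sB1 ->
  zprod (sA1 ++ sA2) (sB1 ++ sB2) = om_mul (zprod sA1 sB1) (zprod sA2 sB2).
Proof.
elim: sA1 sB1 => [|x s IH] [|y t] //= .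
  by move=> _; rewrite /zprod /= om_mul1.
by move=> [e]; rewrite /zprod /= -/(zprod _ _) -/(zprod s t) IH // om_mulA.
Qed.

Definition tup (M : ordMonoid) n (s : seq M) : n.-tuple M := [tuple nth om_one s i | i < n].

Lemma word_fun_tup (M : ordMonoid) (I : {set M}) n (sA sB : seq M) :
  size sA = size sB -> size sA <= n ->
  word_fun I (tup n sA) (tup n sB) = (zprod sA sB \in I).
Proof.
move=> e h; rewrite /word_fun -(big_zprod e h); congr (_ \in I).
by apply: eq_bigr => i _; rewrite !tnth_mktuple.
Qed.


Lemma synle_refl L x : synle L x x.
Proof. by move=> u v. Qed.

Lemma synle_trans L x y z : synle L x y -> synle L y z -> synle L x z.
Proof. by move=> h1 h2 u v /h2 /h1. Qed.

Lemma synle_cat L x x' y y' : synle L x x' -> synle L y y' -> synle L (x ++ y) (x' ++ y').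
Proof.
move=> hx hy u v h.
have h1 : L (u ++ x ++ (y' ++ v)) by apply: hx; rewrite -catA in h; exact: h.
have h2 : L ((u ++ x) ++ y ++ v) by apply: hy; rewrite -catA; exact: h1.
by rewrite -catA in h2; rewrite -catA.
Qed.

Lemma syneq_L L w w' : syneq L w w' -> L w = L w'.
Proof.
move=> [h1 h2]; apply/idP/idP => h.
  by have := h2 [::] [::]; rewrite /= !cats0; apply.
by have := h1 [::] [::]; rewrite /= !cats0; apply.
Qed.

Lemma syn_case (M : ordMonoid) (L : seq bool -> bool) (R : bool -> bool -> bool)
  (u v : bool -> seq bool) (sig : bool -> bool) :
  syn_divides L M ->
  (forall ps : seq (bool * bool),
     L (flatten [seq u x.1 ++ v x.2 | x <- ps]) = all (fun x => R x.1 x.2) ps) ->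
  (forall s, R s (sig s)) ->
  (forall s s', R s (sig s') -> R s' (sig s) -> s = s') ->
  forall n, n <= N1M M n.
Proof.
move=> [S [rep [[S1 SM] rep1 repM repO repS]]] HL Hs Hs2 n.
have repS' : forall w, exists x, x \in S /\ syneq L (rep x) w.
  by move=> w; have [x xS hx] := repS w; exists x.
pose el w := proj1_sig (constructive_indefinite_description _ (repS' w)).
have elS w : el w \in S /\ syneq L (rep (el w)) w.
  exact: (proj2_sig (constructive_indefinite_description _ (repS' w))).
pose I := [set z : M | [exists y in S, L (rep y) && om_le z y]].
have HI : order_ideal I.
  apply/forallP => x; apply/forallP => y; apply/implyP => /andP [].
  rewrite !inE => /existsP [z /andP [zS /andP [Lz yz]]] xy.
  by apply/existsP; exists z; rewrite zS Lz (om_le_trans xy yz).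
have Hmem z : z \in S -> (z \in I) = L (rep z).
  move=> zS; rewrite inE; apply/idP/idP.
    move=> /existsP [y /andP [yS /andP [Ly zy]]].
    by have := repO _ _ zS yS zy [::] [::]; rewrite /= !cats0; apply.
  by move=> Lz; apply/existsP; exists z; rewrite zS Lz om_le_refl.
have Hprod : forall ps : seq (bool * bool),
    zprod [seq el (u x.1) | x <- ps] [seq el (v x.2) | x <- ps] \in S /\
    syneq L (rep (zprod [seq el (u x.1) | x <- ps] [seq el (v x.2) | x <- ps]))
            (flatten [seq u x.1 ++ v x.2 | x <- ps]).
  elim => [|[s t] ps [IH1 IH2]] /=.
    by split.
  have [e1S e1] := elS (u s); have [e2S e2] := elS (v t).
  have e12S := SM _ _ e1S e2S.
  rewrite /zprod /= -/(zprod _ _); split; first exact: SM.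
  have [h1 h2] := repM _ _ e12S IH1.
  have [h3 h4] := repM _ _ e1S e2S.
  have [c1 c2] : syneq L (rep (el (u s)) ++ rep (el (v t))) (u s ++ v t).
    by case: e1 => ? ?; case: e2 => ? ?; split; apply: synle_cat.
  split.
    apply: (synle_trans h1).
    apply: synle_cat; last by case: IH2.
    exact: (synle_trans h3 c1).
  apply: (synle_trans _ h2).

  apply: synle_cat; last by case: IH2.
  exact: (synle_trans c2 h4).
pose al (a : {ffun 'I_n -> bool}) := tup n [seq el (u (a k)) | k <- enum 'I_n].
pose be (b : {ffun 'I_n -> bool}) := tup n [seq el (v (sig (b k))) | k <- enum 'I_n].
have HF a b : word_fun I (al a) (be b) = all (fun k => R (a k) (sig (b k))) (enum 'I_n).
  rewrite /al /be word_fun_tup; first last.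
  - by rewrite size_map size_enum_ord.
  - by rewrite !size_map.

  pose ps := [seq (a k, sig (b k)) | k <- enum 'I_n].
  have [pS pE] := Hprod ps.
  have E1 : [seq el (u (a k)) | k <- enum 'I_n] = [seq el (u x.1) | x <- ps] by rewrite /ps -map_comp.
  have E2 : [seq el (v (sig (b k))) | k <- enum 'I_n] = [seq el (v x.2) | x <- ps] by rewrite /ps -map_comp.
  rewrite E1 E2. rewrite (Hmem _ pS). rewrite (syneq_L pE). rewrite HL. by rewrite all_map.



apply: (@N1M_ge M n I n HI).
have := @fool_lb _ _ _ (word_fun I (n:=n)) al be.
rewrite card_ffun card_bool card_ord; apply.
  by move=> d; rewrite HF; apply/allP => k _.
move=> d d'; rewrite !HF => /allP h1 /allP h2; apply/ffunP => k.
by apply: Hs2; [apply: h1 | apply: h2]; rewrite mem_enum.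
Qed.


Lemma BA2_case (M : ordMonoid) : BA2p_divides M -> forall n, n <= N1M M n.
Proof.
move=> H; apply: (@syn_case M abstar (fun s t => s == t)
   (fun b => if b then [:: true] else [:: true; false])
   (fun b => if b then [:: false] else [:: true; false]) id H).
- elim => [|[s t] ps IH] //=.
  by case: s; case: t => /=.
- by move=> s.
- by move=> s s' /eqP.
Qed.

Lemma Up_case (M : ordMonoid) : Up_divides M -> forall n, n <= N1M M n.
Proof.
move=> H; apply: (@syn_case M noaa (fun s t => ~~ (s && t))
   (fun b => [:: false; b]) (fun b => [:: b; false]) negb H).
- elim => [|[s t] ps IH] //=.
  rewrite /noaa in IH *; rewrite -IH.
  by case: s; case: t => //=; case: (flatten _) => //= [] [] //.
- by case.
- by case; case.
Qed.


Section Gen.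
End Gen.

Lemma mpowS (K : ordMonoid) (x : K) n : mpow x n.+1 = om_mul x (mpow x n).
Proof. by []. Qed.

Lemma mpowD (K : ordMonoid) (x : K) a b : mpow x (a + b) = om_mul (mpow x a) (mpow x b).
Proof.
elim: a => [|a IH]; first by rewrite add0n /= om_mul1.
by rewrite addSn !mpowS IH om_mulA.
Qed.

Definition Gp (K : ordMonoid) (h e0 : K) r := om_mul (mpow h r) e0.

Lemma GpD (K : ordMonoid) (h e0 : K) a b : om_mul (mpow h a) (Gp h e0 b) = Gp h e0 (a + b).
Proof. by rewrite /Gp mpowD om_mulA. Qed.

Lemma Gp_mod (K : ordMonoid) (h e0 : K) q : Gp h e0 q = e0 ->
  forall r k, Gp h e0 (r + q * k) = Gp h e0 r.
Proof.
move=> Hq r k; rewrite /Gp mpowD -om_mulA; congr (om_mul _ _).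
elim: k => [|k IH]; first by rewrite muln0 /= om_mul1.
by rewrite mulnS mpowD -om_mulA IH.
Qed.

Lemma Gp_modE (K : ordMonoid) (h e0 : K) q : 0 < q -> Gp h e0 q = e0 ->
  forall r, Gp h e0 r = Gp h e0 (r %% q).
Proof.
move=> q0 Hq r; rewrite {1}(divn_eq r q) addnC mulnC; exact: Gp_mod.
Qed.

Lemma Gp_le (K : ordMonoid) (h e0 : K) q : 0 < q -> Gp h e0 q = e0 ->
  forall a c, om_le (Gp h e0 a) (Gp h e0 c) -> Gp h e0 a = Gp h e0 c.
Proof.
move=> q0 Hq a c Hac.
have [d Hd] : exists d, Gp h e0 (c + d) = Gp h e0 a.
  exists (a + c * q.-1).
  rewrite addnCA -{1}(muln1 c) -mulnDr add1n prednK // mulnC; exact: Gp_mod.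
have step i : om_le (Gp h e0 (c + i.+1 * d)) (Gp h e0 (c + i * d)).
  elim: i => [|i IH].
    by rewrite mul1n mul0n addn0 Hd.




  have := om_le_mull (mpow h d) IH; rewrite !GpD.
  by rewrite addnCA -mulSn addnCA -mulSn.
have chain i : om_le (Gp h e0 (c + i.+1 * d)) (Gp h e0 (c + d)).
  elim: i => [|i IH]; first by rewrite mul1n om_le_refl.
  exact: om_le_trans (step i.+1) IH.
have := chain q.-1; rewrite prednK // Gp_mod // Hd => Hca.
by apply: om_le_anti; rewrite Hac Hca.
Qed.

Lemma Gp0 (K : ordMonoid) (h e0 : K) : Gp h e0 0 = e0.
Proof. by rewrite /Gp /= om_mul1. Qed.

Lemma Gp_le_iff (K : ordMonoid) (h e0 : K) q : 0 < q -> Gp h e0 q = e0 ->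
  (forall r, 0 < r -> ~~ (q %| r) -> Gp h e0 r <> e0) ->
  forall a c, om_le (Gp h e0 a) (Gp h e0 c) = (a %% q == c %% q).
Proof.
move=> q0 Hq Hn a c; apply/idP/eqP.
  move=> /(Gp_le q0 Hq) Hac.
  have HX : Gp h e0 (c * q.-1 + a) = e0.
    rewrite -GpD Hac GpD -{2}(muln1 c) -mulnDr addn1 prednK // -(add0n (c * q)) mulnC.
    by rewrite Gp_mod // Gp0.
  have qX : q %| c * q.-1 + a.
    case: (posnP (c * q.-1 + a)) => [->|Xp]; first exact: dvdn0.
    by apply/negPn/negP => /(Hn _ Xp).
  have : (c * q.-1 + a + c) %% q = c %% q by rewrite -modnDml (eqP qX) add0n.
  rewrite addnAC -{2}(muln1 c) -mulnDr addn1 prednK // modnMDl => ->.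
  by [].
by move=> e; rewrite (Gp_modE q0 Hq a) e -(Gp_modE q0 Hq c) om_le_refl.
Qed.

Lemma size_flatten_const (T I : Type) (g : I -> seq T) (L : nat) (ks : seq I) :
  (forall k, size (g k) = L) -> size (flatten [seq g k | k <- ks]) = L * size ks.
Proof.
move=> H; elim: ks => [|k ks IH] /=; first by rewrite muln0.
by rewrite size_cat IH H mulnS.
Qed.

Lemma blocks_eval (K : ordMonoid) (h e0 : K) (gA gB : bool -> seq K) (E : bool -> bool -> nat) Lg :
  (forall b, size (gA b) = Lg) -> (forall b, size (gB b) = Lg) ->
  (forall r s t, om_mul (Gp h e0 r) (zprod (gA s) (gB t)) = Gp h e0 (r + E s t)) ->
  forall (ps : seq (bool * bool)) r,
    om_mul (Gp h e0 r) (zprod (flatten [seq gA x.1 | x <- ps]) (flatten [seq gB x.2 | x <- ps]))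
    = Gp h e0 (r + \sum_(x <- ps) E x.1 x.2).
Proof.
move=> hA hB HE; elim => [|[s t] ps IH] r /=.
  by rewrite big_nil addn0 /zprod /= om_mulr1.
rewrite zprod_cat ?hA ?hB // om_mulA HE IH big_cons /= addnA //.
Qed.

Lemma pow_aux j c : 3 ^ (2 * j) <= 2 ^ (2 * j) * c -> 2 ^ j <= c.
Proof.
move=> H; rewrite leqNgt; apply/negP => Hc.
have h89 : 8 ^ j <= 9 ^ j by elim: j {H Hc} => [|j IH] //; rewrite !expnS leq_mul.
have H' : 9 ^ j <= 4 ^ j * c by move: H; rewrite !expnM.
have H2 : 4 ^ j * c < 4 ^ j * 2 ^ j by rewrite ltn_pmul2l ?expn_gt0.
rewrite -expnMn /= in H2.
by have := leq_ltn_trans H' (leq_trans H2 h89); rewrite ltnn.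
Qed.

Lemma mod_case (M : ordMonoid) (p L : nat) (x0 y0 : M) (gA gB : bool -> seq M) :
  prime p -> 0 < L -> (forall b, size (gA b) = L) -> (forall b, size (gB b) = L) ->
  (forall m, exists I : {set M}, order_ideal I /\
     forall a b : {ffun 'I_m -> bool},
       ([forall k, ~~ (a k && b k)] ->
          zprod (x0 :: flatten [seq gA (a k) | k <- enum 'I_m])
                (y0 :: flatten [seq gB (b k) | k <- enum 'I_m]) \in I) /\
       (zprod (x0 :: flatten [seq gA (a k) | k <- enum 'I_m])
                (y0 :: flatten [seq gB (b k) | k <- enum 'I_m]) \in I ->
          p %| \sum_(k < m) (a k && b k))) ->
  forall n, n.-1 %/ (2 * L) <= N1M M n.
Proof.
move=> pp L0 hA hB H n.
case: n => [|n]; first by rewrite div0n.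
rewrite /=.
set j := n %/ (2 * L).
have [I [HI HIm]] := H (2 * j).
pose al (a : {ffun 'I_(2 * j) -> bool}) :=
  tup n.+1 (x0 :: flatten [seq gA (a k) | k <- enum 'I_(2 * j)]).
pose be (b : {ffun 'I_(2 * j) -> bool}) :=
  tup n.+1 (y0 :: flatten [seq gB (b k) | k <- enum 'I_(2 * j)]).
have sz : forall (g : bool -> seq M) (a : {ffun 'I_(2 * j) -> bool}), (forall b, size (g b) = L) ->
    size (flatten [seq g (a k) | k <- enum 'I_(2 * j)]) = L * (2 * j).
  by move=> g a hg; rewrite (size_flatten_const _ (L := L)) ?size_enum_ord.
have szle : L * (2 * j) <= n.
  by rewrite mulnA (mulnC L) mulnC leq_trunc_div.
have HF a b : word_fun I (al a) (be b) =
   (zprod (x0 :: flatten [seq gA (a k) | k <- enum 'I_(2 * j)])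
          (y0 :: flatten [seq gB (b k) | k <- enum 'I_(2 * j)]) \in I).
  rewrite /al /be word_fun_tup //=; first by rewrite (sz _ _ hA) (sz _ _ hB).
  by rewrite (sz _ _ hA).
apply: (@N1M_ge M n.+1 I j HI); apply: pow_aux.
apply: (mod_lb (al := al) (be := be) pp).
  by move=> a b Hab; rewrite HF; apply: (proj1 (HIm a b)).
by move=> a b; rewrite HF; apply: (proj2 (HIm a b)).
Qed.

Local Notation "x ** y" := (om_mul x y) (at level 40, left associativity).


Lemma sum_enum_ord m (F : 'I_m -> nat) : \sum_(k <- enum 'I_m) F k = \sum_(k < m) F k.
Proof. by rewrite enumT. Qed.

Lemma sum_nseq (T : Type) n (a : T) (F : T -> nat) : \sum_(x <- nseq n a) F x = n * F a.
Proof. by elim: n => [|n IH]; rewrite ?big_nil ?big_cons ?IH ?mulSn. Qed.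

Lemma mpow_comm (K : ordMonoid) (x : K) n : mpow x n ** x = x ** mpow x n.
Proof.
elim: n => [|n IH] /=; first by rewrite om_mul1 om_mulr1.
by rewrite -om_mulA IH.
Qed.

Lemma flatten_nseq1 (T : Type) (U : Type) (g : U -> T) n (u : U) :
  flatten [seq [:: g x] | x <- nseq n u] = nseq n (g u).
Proof. by elim: n => //= n ->. Qed.

Section TqAlg.
End TqAlg.

Definition tA (M : ordMonoid) (e : M) (b : bool) := if b then e else om_one.
Definition txg (M : ordMonoid) (e f : M) q (s : bool) :=
  mpow (f ** e) (q.-1 * s) ** (f ** tA e s).
Definition tyg (M : ordMonoid) (e f : M) q (t : bool) :=
  (tA e t ** (f ** e)) ** mpow (f ** e) (q.-1 * t).

Lemma Tq_gadget (M : ordMonoid) (e f : M) q : idem e -> idem f ->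
  forall r s t, Gp (e ** f) e r ** zprod [:: txg e f q s] [:: tyg e f q t] =
                Gp (e ** f) e (r + (q.-1 * s + 1 + (s || t) + q.-1 * t)).
Proof.
rewrite /idem => ee ff.
set h := e ** f.
have L1 k : e ** mpow (f ** e) k = mpow h k ** e.
  elim: k => [|k IH] /=; first by rewrite om_mul1 om_mulr1.
  by rewrite om_mulA (om_mulA e f e) -/h -om_mulA IH om_mulA.
have L2 r k : Gp h e r ** mpow (f ** e) k = Gp h e (r + k).
  by rewrite /Gp -om_mulA L1 om_mulA -mpowD.
have L3 r : Gp h e r ** f = mpow h r.+1.
  by rewrite /Gp -om_mulA -/h mpow_comm.
have hf : h ** f = h by rewrite /h -om_mulA ff.
have L4 R : mpow h R.+1 ** f = mpow h R.+1.
  by rewrite !mpowS -mpow_comm -om_mulA hf.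
move=> r s t; rewrite /zprod /= om_mulr1.
rewrite /txg /tyg (om_mulA (Gp h e r)) (om_mulA (Gp h e r)) L2 (om_mulA (Gp h e _) f) L3.
rewrite (om_mulA (mpow h _ ** tA e s)).
have Ge r' : Gp h e r' ** e = Gp h e r' by rewrite /Gp -om_mulA ee.
have L5 r' : Gp h e r' ** (f ** e) = Gp h e r'.+1 by rewrite om_mulA L3.
have -> : mpow h (r + q.-1 * s).+1 ** tA e s ** (tA e t ** (f ** e)) =
          Gp h e (r + q.-1 * s + 1 + (s || t)).
  set P := mpow h (r + q.-1 * s).+1.
  have HP1 : P ** e = Gp h e (r + q.-1 * s + 1) by rewrite addn1.
  have HP2 : P ** f = P by exact: L4.
  clearbody P.
  case: s HP1 HP2 => /= HP1 HP2; case: t; rewrite /tA /= ?om_mul1 ?om_mulr1.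
  - by rewrite HP1 om_mulA Ge L5 !addn1.
  - by rewrite HP1 L5 !addn1.
  - by rewrite om_mulA HP1 L5 !addn1.
  - by rewrite om_mulA HP2 HP1 addn0.
by rewrite L2 !addnA.
Qed.

Lemma lam_dvd q p lam C : q = lam * p -> 0 < lam -> lam * C = 0 %[mod q] -> p %| C.
Proof.
move=> -> l0 /eqP; rewrite mod0n -/(dvdn _ _) dvdn_pmul2l //.
Qed.

Lemma Tq_E_id q (s t : bool) : 0 < q ->
  q.-1 * s + 1 + (s || t) + q.-1 * t + (s && t) = 1 + q * (s + t).
Proof.
case: q => // k _ /=.
case: s; case: t => /=; rewrite -?plusE -?multE; lia.
Qed.

Lemma zprod_cons (M : ordMonoid) (x y : M) xs ys :
  zprod (x :: xs) (y :: ys) = (x ** y) ** zprod xs ys.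
Proof. by []. Qed.

Lemma Tq_case (M : ordMonoid) q : 1 < q -> Tq M q ->
  forall n, n.-1 %/ (2 * (q %/ pdiv q)) <= N1M M n.
Proof.
move=> q1 [e [f [ee [ff [Hq Hn]]]]].
have q0 : 0 < q by apply: ltnW.
set p := pdiv q.
have pp : prime p := pdiv_prime q1.
set lam := q %/ p.
have lam0 : 0 < lam by rewrite divn_gt0 ?prime_gt0 // pdiv_leq.
have qlp : q = lam * p by rewrite divnK // pdiv_dvd.
set h := e ** f.
have HB r s t : Gp h e r ** zprod (nseq lam (txg e f q s)) (nseq lam (tyg e f q t)) =
     Gp h e (r + lam * (q.-1 * s + 1 + (s || t) + q.-1 * t)).
  have := @blocks_eval M h e (fun s => [:: txg e f q s]) (fun t => [:: tyg e f q t])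
     (fun s t => q.-1 * s + 1 + (s || t) + q.-1 * t) 1 (fun _ => erefl) (fun _ => erefl)
     (Tq_gadget q ee ff) (nseq lam (s, t)) r.
  by rewrite !flatten_nseq1 sum_nseq.
apply: (@mod_case M p lam e om_one (fun s => nseq lam (txg e f q s))
                  (fun t => nseq lam (tyg e f q t)) pp lam0).
- by move=> b; rewrite size_nseq.
- by move=> b; rewrite size_nseq.
move=> m.
exists [set z | om_le z (Gp h e (lam * m))]; split.
  apply/forallP => x; apply/forallP => y; apply/implyP => /andP [].
  by rewrite !inE => hy hxy; apply: om_le_trans hxy hy.
move=> a b.
pose ps := [seq (a k, b k) | k <- enum 'I_m].
have Hz : zprod (e :: flatten [seq nseq lam (txg e f q (a k)) | k <- enum 'I_m])
                (om_one :: flatten [seq nseq lam (tyg e f q (b k)) | k <- enum 'I_m]) =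
          Gp h e (\sum_(x <- ps) lam * (q.-1 * x.1 + 1 + (x.1 || x.2) + q.-1 * x.2)).
  rewrite zprod_cons om_mulr1 -{1}(Gp0 h e).
  have := @blocks_eval M h e (fun s => nseq lam (txg e f q s)) (fun t => nseq lam (tyg e f q t))
     (fun s t => lam * (q.-1 * s + 1 + (s || t) + q.-1 * t)) lam
     (fun _ => size_nseq _ _) (fun _ => size_nseq _ _) HB ps 0.
  by rewrite /ps -!map_comp add0n.
set T := \sum_(x <- ps) _ in Hz.
have HT : T + lam * (\sum_(k < m) (a k && b k)) = lam * m + q * (\sum_(x <- ps) lam * (x.1 + x.2)).
  have -> : \sum_(k < m) (a k && b k) = \sum_(x <- ps) (x.1 && x.2).
    by rewrite big_map sum_enum_ord.

  rewrite /T big_distrr -big_split /= big_distrr /=.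
  have -> : m = size ps by rewrite size_map size_enum_ord.
  rewrite -sum1_size big_distrr -big_split /=; apply: eq_bigr => x _.
  rewrite -mulnDr Tq_E_id // mulnDr; congr (_ + _).
  by rewrite mulnCA.


have Hle := Gp_le_iff q0 Hq Hn.
rewrite Hz inE Hle; split.
  move=> /forallP Hd.
  have C0 : \sum_(k < m) (a k && b k) = 0.
    by apply: big1 => k _; have := Hd k; case: (a k && b k).
  rewrite C0 muln0 addn0 in HT.
  by rewrite HT addnC mulnC modnMDl.
move=> /eqP HTm.
apply: (lam_dvd qlp lam0).
have := HT; move=> /(congr1 (fun x => x %% q)).
rewrite -modnDml HTm modnDml -(modnDmr (lam * m) (q * _)) modnMr addn0 => /eqP.
by rewrite -{2}(addn0 (lam * m)) eqn_modDl => /eqP.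
Qed.



Lemma mpow_inv (K : ordMonoid) (c c' : K) : c' ** c = om_one ->
  forall i, mpow c' i ** mpow c i = om_one.
Proof.
move=> h; elim => [|i IH]; first by rewrite /= om_mul1.
rewrite (mpowS c') (mpowS c) -(mpow_comm c i) om_mulA -(om_mulA c') IH om_mulr1 //.
Qed.

Lemma exists_pow_one (K : ordMonoid) (c c' : K) : c' ** c = om_one ->
  exists r, 0 < r /\ mpow c r = om_one.
Proof.
move=> h.
pose f (i : 'I_(#|K|.+1)) := mpow c i.
have : ~~ injectiveb f.
  apply/negP => /injectiveP inj; have := leq_card f inj; rewrite card_ord ltnn //.
move=> /injectivePn [i [j nij eij]].
have key : forall i j : nat, i < j -> mpow c i = mpow c j -> exists r, 0 < r /\ mpow c r = om_one.
  move=> {f eij nij} i0 j0 lij e.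
  exists (j0 - i0); split; first by rewrite subn_gt0.
  have : mpow c i0 = mpow c i0 ** mpow c (j0 - i0).
    rewrite -mpowD (subnKC (ltnW lij)); exact: e.
  move=> /(congr1 (fun x => mpow c' i0 ** x)); rewrite mpow_inv // om_mulA mpow_inv // om_mul1.
  by move=> ->.
case: (ltngtP i j) => [lij|lji|eq].
- exact: key eij.
- exact: key (esym eij).
- by move: nij; rewrite (val_inj eq) eqxx.
Qed.

Lemma mpow_mul_one (K : ordMonoid) (c : K) q : mpow c q = om_one -> forall k, mpow c (k * q) = om_one.
Proof.
move=> Hq; elim => [|k IH]; first by [].
by rewrite mulSn mpowD Hq IH om_mul1.
Qed.

Lemma order_spec (K : ordMonoid) (c c' : K) : c' ** c = om_one -> c <> om_one ->
  exists q, [/\ 1 < q, mpow c q = om_one &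
            forall r, 0 < r -> ~~ (q %| r) -> mpow c r <> om_one].
Proof.
move=> h cn1.
have [r0 [r00 Hr0]] := exists_pow_one h.
have exP : exists r, (0 < r) && (mpow c r == om_one).
  by exists r0; rewrite r00 Hr0 eqxx.
case: (ex_minnP exP) => q /andP [q0 /eqP Hq] qmin.
exists q; split => //.
  case: q q0 Hq qmin => [|[|q]] //= _.
  by rewrite om_mulr1 => /cn1.
move=> r rp nqr Hr.
have : mpow c (r %% q) = om_one.
  by move: Hr; rewrite {1}(divn_eq r q) mpowD mpow_mul_one // om_mul1.
move=> Hm.
have : q <= r %% q.
  apply: qmin; rewrite Hm eqxx andbT lt0n.
  by move: nqr; rewrite /dvdn.
by rewrite leqNgt ltn_pmod.
Qed.

Lemma zprod_phi (M N : ordMonoid) (S : {set M}) (phi : M -> N) :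
  om_one \in S -> (forall x y, x \in S -> y \in S -> om_mul x y \in S) ->
  phi om_one = om_one ->
  (forall x y, x \in S -> y \in S -> phi (om_mul x y) = om_mul (phi x) (phi y)) ->
  forall xs ys, size xs = size ys -> all (mem S) xs -> all (mem S) ys ->
  zprod xs ys \in S /\ phi (zprod xs ys) = zprod (map phi xs) (map phi ys).
Proof.
move=> S1 HSM phi1 phiM.
elim => [|x xs IH] [|y ys] //=.
move=> [e] /andP [xS xsS] /andP [yS ysS].
have [zS zE] := IH ys e xsS ysS.
rewrite !zprod_cons; split; first by apply: (HSM) => //; apply: (HSM).
by rewrite phiM //; [rewrite phiM // zE | apply: (HSM)].
Qed.

Definition ifo (K : ordMonoid) (b : bool) (x : K) := if b then x else om_one.

Lemma grp_gadget (N : ordMonoid) (a a' b b' : N) :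
  a ** a' = om_one -> b ** b' = om_one ->
  forall r s t,
    Gp (zprod [:: a; a'] [:: b; b']) om_one r **
       zprod [:: ifo s a; ifo s a'] [:: ifo t b; ifo t b'] =
    Gp (zprod [:: a; a'] [:: b; b']) om_one (r + (s && t)).
Proof.
move=> aa' bb' r s t.
set c := zprod [:: a; a'] [:: b; b'].
case: s; case: t; rewrite /ifo /=.
- rewrite addn1 /Gp om_mulr1 om_mulr1 -/c; exact: mpow_comm.
- by rewrite /zprod /= !om_mulr1 aa' om_mulr1 addn0.
- by rewrite /zprod /= !om_mul1 om_mulr1 bb' om_mulr1 addn0.
- by rewrite /zprod /= !om_mul1 om_mulr1 addn0.
Qed.

Lemma size_flatten_nseq (T : Type) (l : seq T) k : size (flatten (nseq k l)) = size l * k.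
Proof. by elim: k => [|k IH]; rewrite ?muln0 // -[nseq _ _]/(l :: nseq k l) /= size_cat IH mulnS. Qed.

Lemma group_case (M N : ordMonoid) : is_group N -> noncomm N -> divides N M ->
  exists D, 0 < D /\ forall n, n.-1 %/ D <= N1M M n.
Proof.
move=> Hg [a [b nab]] [S [phi [[S1 HSM] phi1 phiM phiO phiS]]].
have [a' [aa' a'a]] := Hg a; have [b' [bb' b'b]] := Hg b.
set c := zprod [:: a; a'] [:: b; b'].
have cn1 : c <> om_one.
  move=> e1; apply: nab.
  have e2 : (a ** b) ** (a' ** b') = om_one by move: e1; rewrite /c /zprod /= om_mulr1.
  transitivity ((a ** b) ** (a' ** b') ** (b ** a)); last by rewrite e2 om_mul1.
  by rewrite -!om_mulA (om_mulA b' b) b'b om_mul1 a'a om_mulr1.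
have [c' [_ c'c]] := Hg c.
have [q [q1 Hq Hn]] := order_spec c'c cn1.
have q0 : 0 < q by apply: ltnW.
have Hq' : Gp c om_one q = om_one by rewrite /Gp om_mulr1.
have Hn' : forall r, 0 < r -> ~~ (q %| r) -> Gp c om_one r <> om_one.
  by move=> r r0 nqr; rewrite /Gp om_mulr1; apply: Hn.
set p := pdiv q.
have pp : prime p := pdiv_prime q1.
set lam := q %/ p.
have lam0 : 0 < lam by rewrite divn_gt0 ?prime_gt0 // pdiv_leq.
have qlp : q = lam * p by rewrite divnK // pdiv_dvd.
have [pa paS hpa] := phiS a; have [pa' pa'S hpa'] := phiS a'.
have [pb pbS hpb] := phiS b; have [pb' pb'S hpb'] := phiS b'.
pose gA1 (s : bool) := [:: ifo s pa; ifo s pa'].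
pose gB1 (t : bool) := [:: ifo t pb; ifo t pb'].
pose gA (s : bool) := flatten (nseq lam (gA1 s)).
pose gB (t : bool) := flatten (nseq lam (gB1 t)).
pose gAN (s : bool) := flatten (nseq lam [:: ifo s a; ifo s a']).
pose gBN (t : bool) := flatten (nseq lam [:: ifo t b; ifo t b']).
have szf (T : Type) (l : seq T) : size (flatten (nseq lam l)) = size l * lam.
  exact: size_flatten_nseq.
have HBN r s t : Gp c om_one r ** zprod (gAN s) (gBN t) = Gp c om_one (r + lam * (s && t)).
  have := @blocks_eval N c om_one (fun s => [:: ifo s a; ifo s a'])
     (fun t => [:: ifo t b; ifo t b']) (fun s t => s && t) 2 (fun _ => erefl) (fun _ => erefl)
     (grp_gadget aa' bb') (nseq lam (s, t)) r.
  by rewrite !map_nseq sum_nseq.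
exists (2 * (2 * lam)); split; first by rewrite !muln_gt0 lam0.
apply: (@mod_case M p (2 * lam) om_one om_one gA gB pp).
- by rewrite muln_gt0 lam0.
- by move=> s; rewrite /gA szf mulnC.
- by move=> s; rewrite /gB szf mulnC.
move=> m.
exists [set z | [exists y in S, (phi y == om_one) && om_le z y]]; split.
  apply/forallP => x; apply/forallP => y; apply/implyP => /andP [].
  rewrite !inE => /existsP [z /andP [zS /andP [Lz yz]]] xy.
  by apply/existsP; exists z; rewrite zS Lz (om_le_trans xy yz).
move=> av bv.
pose ps := [seq (av k, bv k) | k <- enum 'I_m].
set xs := om_one :: _; set ys := om_one :: _.
have allS : forall (g : bool -> seq M) (v : {ffun 'I_m -> bool}),
    (forall s, all (mem S) (g s)) -> all (mem S) (om_one :: flatten [seq g (v k) | k <- enum 'I_m]).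
  move=> g v hg /=; rewrite S1 /=; apply/allP => x /flattenP [l /mapP [k _ ->]] xl.
  by have /allP := hg (v k); apply.
have gAS s : all (mem S) (gA s).
  apply/allP => x /flattenP [l]; rewrite mem_nseq => /andP [_ /eqP ->].
  by rewrite !inE; case: s; rewrite /ifo => /orP [] /eqP ->.
have gBS s : all (mem S) (gB s).
  apply/allP => x /flattenP [l]; rewrite mem_nseq => /andP [_ /eqP ->].
  by rewrite !inE; case: s; rewrite /ifo => /orP [] /eqP ->.
have szxy : size xs = size ys.
  rewrite /xs /ys /= !(size_flatten_const _ (L := 2 * lam)) //.
    by move=> s; rewrite /gB szf mulnC.
  by move=> s; rewrite /gA szf mulnC.
have [zS zE] := zprod_phi S1 HSM phi1 phiM szxy (allS _ _ gAS) (allS _ _ gBS).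
have mapA s : map phi (gA s) = gAN s.
  by rewrite /gA /gAN map_flatten map_nseq /= /ifo; case: s; rewrite ?hpa ?hpa' ?phi1.
have mapB s : map phi (gB s) = gBN s.
  by rewrite /gB /gBN map_flatten map_nseq /= /ifo; case: s; rewrite ?hpb ?hpb' ?phi1.
have EA : map phi xs = om_one :: flatten [seq gAN x.1 | x <- ps].
  transitivity (phi om_one :: map phi (flatten [seq gA (av k) | k <- enum 'I_m])); first by [].
  rewrite phi1 map_flatten -map_comp /ps -map_comp; congr (_ :: flatten _).
  by apply: eq_map => k /=; exact: mapA.
have EB : map phi ys = om_one :: flatten [seq gBN x.2 | x <- ps].
  transitivity (phi om_one :: map phi (flatten [seq gB (bv k) | k <- enum 'I_m])); first by [].
  rewrite phi1 map_flatten -map_comp /ps -map_comp; congr (_ :: flatten _).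
  by apply: eq_map => k /=; exact: mapB.
have Hz : phi (zprod xs ys) = Gp c om_one (\sum_(x <- ps) lam * (x.1 && x.2)).
  rewrite zE EA EB zprod_cons om_mulr1 -{1}(Gp0 c om_one).
  rewrite (@blocks_eval N c om_one gAN gBN (fun s t => lam * (s && t)) (2 * lam)) //.
  - by move=> s; rewrite /gAN szf mulnC.
  - by move=> s; rewrite /gBN szf mulnC.
have HT : \sum_(x <- ps) lam * (x.1 && x.2) = lam * \sum_(k < m) (av k && bv k).
  by rewrite -big_distrr big_map sum_enum_ord.
rewrite HT in Hz.
rewrite inE; split.
  move=> /forallP Hd.
  have C0 : \sum_(k < m) (av k && bv k) = 0.
    by apply: big1 => k _; have := Hd k; case: (av k && bv k).
  rewrite C0 muln0 Gp0 in Hz.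
  by apply/existsP; exists (zprod xs ys); rewrite zS Hz eqxx om_le_refl.
move=> /existsP [y /andP [yS /andP [/eqP Py zy]]].
have := phiO _ _ zS yS zy; rewrite Hz Py -[X in om_le _ X -> _](Gp0 c om_one).
rewrite (Gp_le_iff q0 Hq' Hn') mod0n.
move=> /eqP H0; apply: (lam_dvd qlp lam0); by rewrite H0 mod0n.
Qed.


Theorem mainTheorem14 (M : ordMonoid) :
  ((exists q, 1 < q /\ Tq M q) \/ BA2p_divides M \/ Up_divides M \/
   (exists N : ordMonoid, [/\ is_group N, noncomm N & divides N M])) ->
  OmegaN (N1M M).
Proof.
case => [[q [q1 Hq]] | [H | [H | [N [Hg Hnc Hd]]]]].
- apply: (@omega_of _ (2 * (q %/ pdiv q))); last exact: Tq_case.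
  by rewrite muln_gt0 /= divn_gt0 ?prime_gt0 ?pdiv_prime // pdiv_leq // ltnW.
- apply: (@omega_of _ 1) => // n; rewrite divn1; apply: leq_trans (BA2_case H n).
  exact: leq_pred.
- apply: (@omega_of _ 1) => // n; rewrite divn1; apply: leq_trans (Up_case H n).
  exact: leq_pred.
- have [D [D0 HD]] := group_case Hg Hnc Hd.
  exact: (omega_of D0 HD).
Qed.
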